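(* Let $n\ge1$, $k\ge1$, $A\in\{1,\dots,n\}^k$ and $B\subset\{1,\dots,n\}$ with $|B|=k+1$. Let $\tilde A=c^{1-\rho(A,B)}A$, $\tilde B=c^{1-\rho(A,B)}B$, let $I=(i_1\le\dots\le i_k)$ be the non-decreasing rearrangement of $\tilde A$, and $(j_1,\dots,j_k)=\Pi(I,\tilde B)$. Then $i_l<j_l$ for all $l\in\{1,\dots,k\}$.
   Context: Let $c=(1\,2\,\dots\,n)$ be the cyclic shift $x\mapsto x+1$ for $x<n$, $n\mapsto1$; it acts on sequences componentwise and on sets elementwise, and powers $c^m$ are taken with $m\in\mathbb Z$ (modulo $n$). Parking process: given $E=(e_1,\dots,e_k)\in\{1,\dots,n\}^k$ and $O\subset\{1,\dots,n\}$ with $|O|=k+1$, define $(p_1,\dots,p_k)$ by backward induction: $p_k=c^{r}(e_k)$ where $r=\min\{s\in\{1,\dots,n\}: c^s(e_k)\in O\}$, and, once $p_k,\dots,p_{l+1}$ are defined, $p_l=c^{r}(e_l)$ where $r=\min\{s\in\{1,\dots,n\}: c^s(e_l)\in O\setminus\{p_{l+1},\dots,p_k\}\}$. Write $\Pi(E,O)=(p_1,\dots,p_k)$; the unique element of $O\setminus\{p_1,\dots,p_k\}$ is the residue $\rho(E,O)$. *)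

(* Defs.v *)
(* Points of {1,...,n} are natural numbers x with 1 <= x <= n. *)
From mathcomp Require Import all_boot all_order all_algebra.
Set Implicit Arguments. Unset Strict Implicit. Unset Printing Implicit Defensive.

Definition cyc (n x : nat) : nat := if x < n then x.+1 else 1.

Definition cpow (n : nat) (m : int) (x : nat) : nat :=
  iter `|(m %% (n%:Z))%Z|%N (cyc n) x.

(* componentwise / elementwise action on sequences and (sets given as) sequences *)
Definition cpow_seq (n : nat) (m : int) (s : seq nat) : seq nat :=
  map (cpow n m) s.

(* c^r(e) where r = min { s in {1..n} : c^s(e) \in R } *)
Definition hit (n : nat) (R : seq nat) (e : nat) : nat :=
  let i := find (fun s => iter s (cyc n) e \in R) (iota 1 n) in
  iter i.+1 (cyc n) e.

(* backward induction: the head is p_l, computed from O minus the already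
   parked p_{l+1},...,p_k (given by the tail) *)
Fixpoint park (n : nat) (O : seq nat) (E : seq nat) : seq nat :=
  match E with
  | [::] => [::]
  | e :: E' => let P := park n O E' in
               hit n [seq x <- O | x \notin P] e :: P
  end.

Definition Pi (n : nat) (E O : seq nat) : seq nat := park n O E.

(* rho(E, O): the (unique) element of O \ {p_1,...,p_k} *)
Definition rho (n : nat) (E O : seq nat) : nat :=
  head 0 [seq x <- O | x \notin Pi n E O].

Definition in_range (n x : nat) : bool := (1 <= x <= n).

(* Main.v *)
Require Import Defs.
From mathcomp Require Import all_boot all_order all_algebra zify.

Section S.
Variable n : nat.
Hypothesis n0 : 0 < n.

Lemma cyc_range x : in_range n (cyc n x).
Proof. rewrite /in_range /cyc; case: ifP => /= H; lia. Qed.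

Lemma iter_range s x : in_range n x -> in_range n (iter s (cyc n) x).
Proof. by case: s => [//|s] _; rewrite iterS cyc_range. Qed.

Lemma iter_small s e : e + s <= n -> iter s (cyc n) e = e + s.
Proof.
elim: s => [|s IH] H /=; first by rewrite addn0.
rewrite IH; last lia. rewrite /cyc ifT; lia.
Qed.

Lemma iter_wrap e : in_range n e -> iter (n.+1 - e) (cyc n) e = 1.
Proof.
rewrite /in_range => /andP [H1 H2].
have -> : n.+1 - e = (n - e).+1 by lia.
rewrite iterS iter_small; last lia.
by rewrite /cyc subnKC // ltnn.
Qed.

Lemma iter_reach e x : in_range n e -> in_range n x ->
  exists2 s, 0 < s <= n & iter s (cyc n) e = x.
Proof.
move=> He Hx; move: (He) (Hx); rewrite /in_range => /andP [e1 e2] /andP [x1 x2].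
case: (ltnP e x) => ex.
  exists (x - e); first lia. rewrite iter_small; lia.
exists ((x - 1) + (n.+1 - e)); first lia.
rewrite iterD iter_wrap // -[X in _ = X](@subnK 1 x) // addnC iter_small //; lia.
Qed.

Lemma cyc_inj x y : in_range n x -> in_range n y -> cyc n x = cyc n y -> x = y.
Proof. rewrite /in_range /cyc => /andP[? ?] /andP[? ?]; do 2 case: ifP => ? ; lia. Qed.

Lemma iter_inj j x y : in_range n x -> in_range n y ->
  iter j (cyc n) x = iter j (cyc n) y -> x = y.
Proof.
move=> Hx Hy; elim: j => [//|j IH]; rewrite !iterS => /cyc_inj H.
by apply: IH; apply: H; apply: iter_range.
Qed.

End S.

Section S2.
Variable n : nat.
Hypothesis n0 : 0 < n.

Definition rng R := all (in_range n) R.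

Lemma hit_spec R e : in_range n e -> rng R -> R != [::] ->
  exists s, [/\ 0 < s <= n, hit n R e = iter s (cyc n) e,
     iter s (cyc n) e \in R & forall t, 0 < t < s -> iter t (cyc n) e \notin R].
Proof.
move=> He HR; case: R HR => [//|x R'] HR _.
have Hx : in_range n x by move: HR => /andP[].
have [s0 Hs0 Ex] := @iter_reach n n0 _ _ He Hx.
set a := (fun s => iter s (cyc n) e \in x :: R').
have Hh : has a (iota 1 n).
  apply/hasP; exists s0; first by rewrite mem_iota; lia.
  by rewrite /a Ex mem_head.
have Hi : find a (iota 1 n) < n by move: Hh; rewrite has_find size_iota.
have := nth_find 0 Hh; rewrite nth_iota // => Ha.
exists (find a (iota 1 n)).+1; split.
- lia.
- by [].
- by rewrite -add1n.
- move=> t Ht. have := @before_find _ 0 a (iota 1 n) t.-1.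
  rewrite nth_iota; last lia.
  rewrite (_ : 1 + t.-1 = t); last lia.
  move=> H; apply/negbT; apply: H; lia.
Qed.

Arguments hit_spec {R e}.

Lemma hit_eq R e s : in_range n e -> rng R -> 0 < s <= n ->
  iter s (cyc n) e \in R -> (forall t, 0 < t < s -> iter t (cyc n) e \notin R) ->
  hit n R e = iter s (cyc n) e.
Proof.
move=> He HR Hs Hin Hb.
have Rn : R != [::] by case: R Hin HR {Hb}.
have [s' [Hs' -> Hin' Hb']] := hit_spec He HR Rn.
case: (ltngtP s s') => c.
- by move: (Hb' s); rewrite Hin; move=> /(_ _)/negP; lia.
- by move: (Hb s'); rewrite Hin'; move=> /(_ _)/negP; lia.
- by rewrite c.
Qed.

Arguments hit_eq {R e s}.

Definition step R e := [seq x <- R | x != hit n R e].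

Lemma rng_filter (p : pred nat) R : rng R -> rng (filter p R).
Proof. move=> H; apply/allP => x; rewrite mem_filter => /andP[_ ]; by move/allP: H; apply. Qed.

Lemma hit_after R a s : in_range n a -> rng R -> 0 < s <= n ->
  iter s (cyc n) a \in R -> (forall t, 0 < t < s -> iter t (cyc n) a \notin R) ->
  let p := iter s (cyc n) a in
  let R' := [seq x <- R | x != p] in R' != [::] ->
  hit n R' a = hit n R' p.
Proof.
move=> Ha HR Hs Hin Hb p R' R'n.
have HR' : rng R' by apply: rng_filter.
have [u [Hu -> Hinu Hbu]] := hit_spec Ha HR' R'n.
have Hus : s < u.
  case: (ltngtP s u) => c //.
  - move: Hinu; rewrite mem_filter => /andP[_ H]. by move: (Hb u); rewrite H => /(_ _)/negP; lia.
  - by move: Hinu; rewrite mem_filter -c /p eqxx.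
have Hp : in_range n p by apply: iter_range.
have E : iter (u - s) (cyc n) p = iter u (cyc n) a by rewrite /p -iterD subnK // ltnW.
rewrite (@hit_eq R' p (u - s)) //.
- lia.
- by rewrite E.
- move=> t Ht; rewrite /p -iterD; apply: Hbu; lia.
Qed.

Arguments hit_after {R a s}.

Lemma step_comm R a b : in_range n a -> in_range n b -> rng R ->
  step (step R a) b = step (step R b) a.
Proof.
move=> Ha Hb HR.
case: (R =P [::]) => [->//|/eqP Rn].
have [sa [Hsa Ea Ina Ba]] := hit_spec Ha HR Rn.
have [sb [Hsb Eb Inb Bb]] := hit_spec Hb HR Rn.
rewrite /step Ea Eb.
set p := iter sa (cyc n) a; set q := iter sb (cyc n) b.
rewrite -!filter_predI; apply: eq_in_filter => x xR /=.
case: (p =P q) => [pq|/eqP pq].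
- rewrite -pq.
  case: ([seq x <- R | x != p] =P [::]) => [E|/eqP E].
    have : x \notin [seq x <- R | x != p] by rewrite E.
    by rewrite mem_filter xR andbT negbK => /eqP ->; rewrite eqxx !andbF.
  rewrite (hit_after Ha HR Hsa Ina Ba E).
  have E' : [seq x <- R | x != q] != [::] by rewrite -pq.
  by have := hit_after Hb HR Hsb Inb Bb E'; rewrite -/q -pq => ->.
- rewrite (@hit_eq _ b sb) //; last first.
  + by move=> t Ht; rewrite mem_filter negb_and Bb ?orbT.
  + by rewrite mem_filter Inb andbT eq_sym.
  + exact: rng_filter.
  rewrite (@hit_eq _ a sa) //; last first.
  + by move=> t Ht; rewrite mem_filter negb_and Ba ?orbT.
  + by rewrite mem_filter Ina andbT.
  + exact: rng_filter.
  by rewrite andbC.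
Qed.

End S2.

Section S3.
Variable n : nat.
Hypothesis n0 : 0 < n.

Definition G R E := foldr (fun e R => step n R e) R E.

Lemma rng_step R e : rng n R -> rng n (step n R e).
Proof. exact: rng_filter. Qed.

Lemma rng_G R E : rng n R -> rng n (G R E).
Proof. by move=> HR; elim: E => [//|e E IH] /=; apply: rng_step. Qed.

Lemma G_move R x t1 t2 : rng n R -> rng n (x :: t1 ++ t2) ->
  G R (t1 ++ x :: t2) = G R (x :: t1 ++ t2).
Proof.
move=> HR; elim: t1 => [//|y t1 IH] /= /and3P[Hx Hy Ht].
rewrite IH /=; last by rewrite Hx.
by rewrite step_comm //; apply: rng_G.
Qed.

Lemma G_perm R E E' : rng n R -> rng n E -> perm_eq E E' -> G R E = G R E'.
Proof.
move=> HR; elim: E E' => [|x E IH] E' HE P.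
  by case: E' P => // y s /perm_size.
have xE : x \in E' by rewrite -(perm_mem P) mem_head.
move: P; case/splitPr: xE => t1 t2 P.
have P2 : perm_eq (t1 ++ x :: t2) (x :: t1 ++ t2) by rewrite -cat1s perm_catCA.
have P3 : perm_eq E (t1 ++ t2) by rewrite -(perm_cons x); apply: perm_trans P P2.
have HE' : rng n (x :: t1 ++ t2) by rewrite /rng -(perm_all _ P2) -(perm_all _ P).
rewrite G_move //= (IH (t1 ++ t2)) //; by move: HE => /andP[].
Qed.

Definition Ffree O E := [seq x <- O | x \notin park n O E].

Lemma Ffree_G O E : Ffree O E = G O E.
Proof.
elim: E => [|e E IH] /=.
  by rewrite /Ffree /= (eq_filter (a2 := predT)) ?filter_predT.
rewrite -IH /Ffree /step /= -filter_predI; apply: eq_filter => x /=.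
by rewrite in_cons negb_or.
Qed.

Variable j : nat.
Let f := iter j (cyc n).

Lemma mem_map_f R y : rng n R -> in_range n y -> (f y \in map f R) = (y \in R).
Proof.
move=> HR Hy; apply/mapP/idP => [[z zR E]|yR]; last by exists y.
have Hz : in_range n z by move/allP: HR; apply.
by rewrite (@iter_inj n n0 j y z Hy Hz E).
Qed.

Lemma hit_map R e : rng n R -> in_range n e -> hit n (map f R) (f e) = f (hit n R e).
Proof.
move=> HR He; rewrite /hit.
have Hc : forall s x, iter s (cyc n) (f x) = f (iter s (cyc n) x).
  by move=> s x; rewrite /f -!iterD addnC.
rewrite (eq_find (a2 := fun s => iter s (cyc n) e \in R)); first by rewrite Hc.
by move=> s /=; rewrite Hc mem_map_f //; apply: (@iter_range n n0).
Qed.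

Lemma rng_map R : rng n R -> rng n (map f R).
Proof. move=> HR; apply/allP => x /mapP [y yR ->]; rewrite /f; apply: (@iter_range n n0); exact: (allP HR y yR). Qed.

Lemma step_map R e : rng n R -> in_range n e -> step n (map f R) (f e) = map f (step n R e).
Proof.
move=> HR He; rewrite /step hit_map // filter_map; congr map.
apply: eq_in_filter => x xR /=.
have Hx : in_range n x by move/allP: HR; apply.
have Hh : in_range n (hit n R e).
  have Rn : R != [::] by case: R xR {HR}.
  have [s [_ -> _ _]] := @hit_spec n n0 R e He HR Rn. exact: iter_range.
apply/negP/negP => H1 /eqP H2; apply: H1; apply/eqP.
- by rewrite H2.
- exact: (@iter_inj n n0 j _ _ Hx Hh H2).
Qed.

Lemma G_map R E : rng n R -> rng n E -> G (map f R) (map f E) = map f (G R E).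
Proof.
move=> HR; elim: E => [//|e E IH] /= /andP[He HE].
by rewrite IH // step_map //; apply: rng_G.
Qed.

End S3.

Section S4.
Variable n : nat.
Hypothesis n0 : 0 < n.

Lemma Ffree_cons O e E : Ffree n O (e :: E) = step n (Ffree n O E) e.
Proof. by rewrite !Ffree_G. Qed.

Lemma park_gt O E : rng n O -> rng n E -> 1 \in Ffree n O E ->
  forall l, l < size E -> nth 0 E l < nth 0 (park n O E) l.
Proof.
move=> HO; elim: E => [//|e E IH] /= /andP[He HE].
rewrite Ffree_cons /step mem_filter => /andP[H1 HR1] [|l] Hl /=; last by apply: IH.
have HR : rng n (Ffree n O E) by apply: rng_filter.
have Rn : Ffree n O E != [::] by case: (Ffree n O E) HR1.
have [s [Hs Eh Hin Hb]] := @hit_spec n n0 _ e He HR Rn.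
rewrite /Ffree in Eh H1 Hin Hb Rn HR HR1 *.
rewrite Eh. rewrite Eh in H1.
have Ew := @iter_wrap n n0 e He.
have Hss : s < n.+1 - e.
  case: (ltngtP s (n.+1 - e)) => c //.
  - have : 0 < n.+1 - e < s by move: He; rewrite /in_range; lia.
    by move/Hb; rewrite Ew HR1.
  - by move: H1; rewrite c Ew eqxx.
rewrite (@iter_small n) //; move: He; rewrite /in_range; lia.
Qed.

Lemma size_step R e : uniq R -> (size R <= (size (step n R e)).+1)%N.
Proof.
move=> U; rewrite /step size_filter.
rewrite -(count_predC (fun x => x != hit n R e) R).
have : count (predC (fun x => x != hit n R e)) R <= 1.
  rewrite (eq_count (a2 := pred1 (hit n R e))); last by move=> x /=; rewrite negbK.
  by rewrite count_uniq_mem //; case: (_ \in _).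
lia.
Qed.

Lemma size_G R E : uniq R -> size R <= size (G n R E) + size E.
Proof.
move=> U; elim: E => [|e E IH] /=; first by rewrite addn0.
have UG : uniq (G n R E).
  by elim: E {IH} => [//|e' E' IH'] /=; rewrite filter_uniq.
move: (@size_step _ e UG) => H; rewrite addnS -addSn; apply: leq_trans IH _; by rewrite leq_add2r.
Qed.

End S4.

Lemma absmod (n r : nat) : 1 <= r <= n ->
  `|((1 - r%:Z)%R %% n%:Z)%Z|%N = (n.+1 - r) %% n.
Proof.
move=> H.
have E : (1 - r%:Z = (-1) * n%:Z + (n.+1 - r)%N%:Z)%R.
  lia.
by rewrite E modzMDl modz_nat absz_nat.
Qed.

Theorem lemma5p2 (n k : nat) (A B : seq nat) :
  1 <= n -> 1 <= k ->
  size A = k -> all (in_range n) A ->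
  uniq B -> size B = k.+1 -> all (in_range n) B ->
  let m : int := (1 - (rho n A B)%:Z)%R in
  let At := cpow_seq n m A in
  let Bt := cpow_seq n m B in
  let I := sort leq At in
  let J := Pi n I Bt in
  forall l, l < k -> nth 0 I l < nth 0 J l.
Proof.
move=> n0 k0 sA rA uB sB rB m At Bt I J l Hl.
have HG := @size_G n n0 B A uB.
have : rho n A B \in Ffree n B A.
  rewrite /rho /Pi -/(Ffree n B A); move: HG; rewrite -Ffree_G.
  case: (Ffree n B A) => [|r s] /=; first lia.
  by rewrite mem_head.
set r := rho n A B => rR.
have Hr : in_range n r by move: rR; rewrite mem_filter => /andP[_ ]; move/allP: rB; apply.
set j := `|(m %% n%:Z)%Z|%N.
set f := iter j (cyc n).
have Hf : f r = 1.
  rewrite /f /j /m -/r absmod //.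
  case: (r =P 1) => [->|/eqP r1]; first by rewrite subSS subn0 modnn.
  rewrite modn_small; last by move: Hr; rewrite /in_range; lia.
  exact: (@iter_wrap n n0).
have EAt : At = map f A by [].
have EBt : Bt = map f B by [].
have rAt : rng n At by rewrite EAt; exact: (@rng_map n n0 j).
have rBt : rng n Bt by rewrite EBt; exact: (@rng_map n n0 j).
have PI : perm_eq At I by rewrite perm_sym perm_sort.
have rI : rng n I by rewrite /rng -(perm_all _ PI).
have H1 : 1 \in Ffree n Bt I.
  rewrite Ffree_G -(@G_perm n n0 _ _ _ rBt rAt PI) EAt EBt (@G_map n n0 j) // -Hf.
  by apply: map_f; rewrite -Ffree_G.
apply: (@park_gt n n0 _ _ rBt rI H1).
by rewrite size_sort size_map sA.
Qed.
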